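(* For all integers $m,n \geq 3$, the toroidal grid $C_m \Box C_n$ is not diametrical, i.e. $\Gamma_b(C_m \Box C_n) \neq \mathrm{diam}(C_m \Box C_n)$.
   Context: $C_k$ is the cycle on $k$ vertices and $\Box$ the Cartesian product of graphs. Let $G=(V,E)$ be a finite connected graph with distance $d(u,v)$, eccentricity $e(v)=\max_w d(v,w)$ and diameter $\mathrm{diam}(G)=\max_v e(v)$. A broadcast is a function $f: V\to\{0,\dots,\mathrm{diam}(G)\}$ with $f(v)\le e(v)$; its cost is $\sum_v f(v)$; it is dominating if every $u$ has some $v$ with $f(v)\ge 1$ and $d(u,v)\le f(v)$; a dominating broadcast is minimal if decreasing $f(v)$ for any $v$ with $f(v)>0$ destroys domination. $\Gamma_b(G)$ is the maximum cost of a minimal dominating broadcast, and $G$ is called diametrical if $\Gamma_b(G)=\mathrm{diam}(G)$. *)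

(* Defs.v *)
From mathcomp Require Import all_boot.
Set Implicit Arguments. Unset Strict Implicit. Unset Printing Implicit Defensive.

Section Broadcast.
Variables (T : finType) (e : rel T).

Definition walk_of_length (k : nat) (u v : T) : bool :=
  [exists p : k.-tuple T, path e u p && (last u p == v)].

(* graph distance: least k such that a walk of length k from u to v exists
   (for a connected graph this is < #|T|) *)
Definition dist (u v : T) : nat :=
  find (fun k => walk_of_length k u v) (iota 0 #|T|).

Definition ecc (v : T) : nat := \max_(w : T) dist v w.
Definition diam : nat := \max_(v : T) ecc v.


Definition broadcast_values := {ffun T -> 'I_diam.+1}.

Definition is_broadcast (f : T -> nat) : bool := [forall v, f v <= ecc v].

Definition bcost (f : T -> nat) : nat := \sum_(v : T) f v.

Definition dominating (f : T -> nat) : bool :=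
  [forall u, exists v, (0 < f v) && (dist u v <= f v)].

Definition decr_at (f : T -> nat) (v : T) : T -> nat :=
  fun w => if w == v then (f v).-1 else f w.

Definition minimal_dominating (f : T -> nat) : bool :=
  [&& is_broadcast f, dominating f &
      [forall v, (0 < f v) ==> ~~ dominating (decr_at f v)]].

Definition Gamma_b : nat :=
  \max_(f : broadcast_values | minimal_dominating (fun v => nat_of_ord (f v)))
     bcost (fun v => nat_of_ord (f v)).

Definition diametrical : Prop := Gamma_b = diam.

End Broadcast.

Definition cycle_rel (k : nat) : rel 'I_k :=
  fun i j => (nat_of_ord j == (i.+1 %% k)) || (nat_of_ord i == (j.+1 %% k)).

Definition cart_prod (A B : finType) (eA : rel A) (eB : rel B) : rel (A * B) :=
  fun x y => ((x.1 == y.1) && eB x.2 y.2) || ((x.2 == y.2) && eA x.1 y.1).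

Definition torus (m n : nat) : rel ('I_m * 'I_n) :=
  cart_prod (@cycle_rel m) (@cycle_rel n).
Arguments torus : clear implicits.
Arguments cycle_rel : clear implicits.

(* Main.v *)
Require Import Defs.
From mathcomp Require Import all_boot.
From mathcomp Require Import zify.
From Stdlib Require Import FunctionalExtensionality.
Set Implicit Arguments. Unset Strict Implicit. Unset Printing Implicit Defensive.

Section General.
Variables (T : finType) (e : rel T).

Lemma walkP k u v :
  reflect (exists p : seq T, [/\ size p = k, path e u p & last u p = v])
          (walk_of_length e k u v).
Proof.
apply: (iffP existsP) => [[p /andP[H1 /eqP H2]] | [p [Hs H1 H2]]].
  by exists (val p); split => //; exact: size_tuple.
have Hs' : size p == k by apply/eqP.
by exists (Tuple Hs'); rewrite /= H1 H2 eqxx.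
Qed.

Lemma walk_iter (s : T -> T) (Hs : forall x, e x (s x)) k x :
  walk_of_length e k x (iter k s x).
Proof.
apply/walkP; exists (traject s (s x) k); split.
- by rewrite size_traject.
- apply: sub_path (fpath_traject s x k) => a b /eqP <-; exact: Hs.
- by rewrite last_traject.
Qed.

Lemma walk_cat k l u w v :
  walk_of_length e k u w -> walk_of_length e l w v -> walk_of_length e (k + l) u v.
Proof.
move=> /walkP [p [Hp1 Hp2 Hp3]] /walkP [q [Hq1 Hq2 Hq3]].
apply/walkP; exists (p ++ q); split.
- by rewrite size_cat Hp1 Hq1.
- by rewrite cat_path Hp2 Hp3 Hq2.
- by rewrite last_cat Hp3.
Qed.

Lemma dist_le k u v : walk_of_length e k u v -> k < #|T| -> dist e u v <= k.
Proof.
move=> Hw Hk; rewrite /dist leqNgt; apply/negP => Hlt.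
have := before_find 0 Hlt; rewrite nth_iota // add0n Hw //.
Qed.

Lemma dist_walk u v : dist e u v < #|T| -> walk_of_length e (dist e u v) u v.
Proof.
move=> H.
have Hh : has (fun k => walk_of_length e k u v) (iota 0 #|T|).
  by rewrite has_find size_iota.
by have := nth_find 0 Hh; rewrite nth_iota // add0n.
Qed.

Lemma dist_max u v : dist e u v <= #|T|.
Proof. by rewrite /dist -[X in _ <= X](size_iota 0) find_size. Qed.

Lemma pot_walk (phi : T -> nat)
  (Hphi : forall x y, e x y -> phi x <= phi y + 1 /\ phi y <= phi x + 1) k u v :
  walk_of_length e k u v -> phi u <= phi v + k /\ phi v <= phi u + k.
Proof.
move/walkP=> [p [<- Hp <-]].
elim: p u Hp => [|x p IH] u /=; first by rewrite addn0.
move/andP=> [Hux Hp]; have := IH x Hp; have := Hphi _ _ Hux; lia.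
Qed.

Lemma dist_lb L u v :
  L <= #|T| -> (forall k, walk_of_length e k u v -> L <= k) -> L <= dist e u v.
Proof.
move=> HL Hk; case: (ltnP (dist e u v) #|T|) => H.
  by apply: Hk; apply: dist_walk.
exact: leq_trans HL H.
Qed.

End General.

Section Torus.
Variables (m n : nat) (Hm : 2 < m) (Hn : 2 < n).

Let T := ('I_m * 'I_n)%type.
Let E := torus m n.

Lemma m_gt0 : 0 < m. Proof. lia. Qed.
Lemma n_gt0 : 0 < n. Proof. lia. Qed.

Definition sf k (Hk : 0 < k) (i : 'I_k) : 'I_k := Ordinal (ltn_pmod i.+1 Hk).
Definition sb k (Hk : 0 < k) (i : 'I_k) : 'I_k := Ordinal (ltn_pmod (i + k.-1) Hk).

Lemma sf_edge k (Hk : 0 < k) i : cycle_rel k i (sf Hk i).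
Proof. by rewrite /cycle_rel /= eqxx. Qed.

Lemma sb_edge k (Hk : 0 < k) i : cycle_rel k i (sb Hk i).
Proof.
apply/orP; right => /=.
rewrite -addn1 modnDml -addnA addn1 prednK // modnDr modn_small //.
Qed.

Lemma sf_iter k (Hk : 0 < k) (i : 'I_k) j : val (iter j (sf Hk) i) = (i + j) %% k.
Proof.
elim: j => [|j IH] /=; first by rewrite addn0 modn_small.
by rewrite IH -addn1 modnDml -addnA addn1.
Qed.

Lemma sb_iter k (Hk : 0 < k) (i : 'I_k) j : val (iter j (sb Hk) i) = (i + j * k.-1) %% k.
Proof.
elim: j => [|j IH] /=; first by rewrite addn0 modn_small.
rewrite IH modnDml; congr (_ %% _); rewrite mulSn; lia.
Qed.

Lemma cyc_reach k (Hk : 0 < k) (i j : 'I_k) :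
  exists2 l, l <= k./2 & (iter l (sf Hk) i = j \/ iter l (sb Hk) i = j).
Proof.
have Hh := odd_double_half k; rewrite -muln2 in Hh.
have Ho : odd k <= 1 by case: odd.
have Hi := ltn_ord i; have Hj := ltn_ord j.
have [kf [kb [Hsum Hf Hb]]] : exists kf kb, [/\ kf + kb = k,
    iter kf (sf Hk) i = j & iter kb (sb Hk) i = j].
  case: (leqP j i) => Hji.
  - exists (j + k - i), (i - j); split; first lia.
    + apply: val_inj; rewrite sf_iter /=.
      have -> : i + (j + k - i) = j + k by lia.
      by rewrite modnDr modn_small.
    + apply: val_inj; rewrite sb_iter /=.
      have -> : i + (i - j) * k.-1 = (i - j) * k + j by nia.
      by rewrite modnMDl modn_small.
  - exists (j - i), (i + k - j); split; first lia.
    + apply: val_inj; rewrite sf_iter /=.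
      have -> : i + (j - i) = j by lia.
      by rewrite modn_small.
    + apply: val_inj; rewrite sb_iter /=.
      have -> : i + (i + k - j) * k.-1 = (i + k - j).-1 * k + j by nia.
      by rewrite modnMDl modn_small.
case: (leqP kf k./2) => H; first by exists kf; auto.
exists kb; [lia | auto].
Qed.

Definition lift1 (s : 'I_m -> 'I_m) (x : T) : T := (s x.1, x.2).
Definition lift2 (s : 'I_n -> 'I_n) (x : T) : T := (x.1, s x.2).

Lemma lift1_iter s k a b : iter k (lift1 s) (a, b) = (iter k s a, b).
Proof. by elim: k => //= k ->. Qed.
Lemma lift2_iter s k a b : iter k (lift2 s) (a, b) = (a, iter k s b).
Proof. by elim: k => //= k ->. Qed.

Lemma lift1_edge s : (forall x, cycle_rel m x (s x)) -> forall x, E x (lift1 s x).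
Proof. by move=> Hs x; rewrite /E /torus /cart_prod /= eqxx Hs orbT. Qed.
Lemma lift2_edge s : (forall x, cycle_rel n x (s x)) -> forall x, E x (lift2 s x).
Proof. by move=> Hs x; rewrite /E /torus /cart_prod /= eqxx Hs. Qed.

Lemma walk1 (a c : 'I_m) b : exists2 k, k <= m./2 & walk_of_length E k (a, b) (c, b).
Proof.
have [k Hk [H|H]] := cyc_reach m_gt0 a c; exists k => //.
- have := walk_iter (lift1_edge (sf_edge m_gt0)) k (a, b).
  by rewrite lift1_iter H.
- have := walk_iter (lift1_edge (sb_edge m_gt0)) k (a, b).
  by rewrite lift1_iter H.
Qed.

Lemma walk2 (b d : 'I_n) a : exists2 k, k <= n./2 & walk_of_length E k (a, b) (a, d).
Proof.
have [k Hk [H|H]] := cyc_reach n_gt0 b d; exists k => //.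
- have := walk_iter (lift2_edge (sf_edge n_gt0)) k (a, b).
  by rewrite lift2_iter H.
- have := walk_iter (lift2_edge (sb_edge n_gt0)) k (a, b).
  by rewrite lift2_iter H.
Qed.

Lemma cardT : #|{: 'I_m * 'I_n}| = m * n.
Proof. by rewrite card_prod !card_ord. Qed.

Lemma half_facts k : k./2 * 2 <= k /\ k <= k./2 * 2 + 1.
Proof.
have Hh := odd_double_half k; rewrite -muln2 in Hh.
have Ho : odd k <= 1 by case: odd. lia.
Qed.

Lemma diam_le : diam E <= m./2 + n./2.
Proof.
apply/bigmax_leqP => [[a b] _]; apply/bigmax_leqP => [[c d] _].
have [k1 Hk1 W1] := walk1 a c b.
have [k2 Hk2 W2] := walk2 b d c.
apply: leq_trans (dist_le (walk_cat W1 W2) _) _.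
  rewrite cardT; have := half_facts m; have := half_facts n; nia.
lia.
Qed.


Definition cd k (i : nat) := minn i (k - i).

Lemma cd_lip (x y : 'I_m) : cycle_rel m x y -> cd m x <= cd m y + 1 /\ cd m y <= cd m x + 1.
Proof.
have Hx := ltn_ord x; have Hy := ltn_ord y.
have Hmod : forall z : 'I_m, (z.+1 %% m = z.+1 /\ z.+1 < m) \/ (z.+1 = m /\ z.+1 %% m = 0).
  move=> z; have Hz := ltn_ord z; case: (ltnP z.+1 m) => Hlt.
    by left; rewrite modn_small.
  have Heq : z.+1 = m by lia.
  by right; rewrite Heq modnn.
rewrite /cycle_rel /cd => /orP [] /eqP H.
- case: (Hmod x) => [[H1 H2]|[H2 H1]]; rewrite H1 in H; lia.
- case: (Hmod y) => [[H1 H2]|[H2 H1]]; rewrite H1 in H; lia.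
Qed.

Definition phi (j : 'I_n) (x : T) : nat := cd m x.1 + (x.2 == j).

Lemma phi_lip j x y : E x y -> phi j x <= phi j y + 1 /\ phi j y <= phi j x + 1.
Proof.
rewrite /E /torus /cart_prod => /orP [/andP [/eqP H1 _] | /andP [/eqP H2 H]].
- rewrite /phi H1; case: (x.2 == j); case: (y.2 == j) => /=; lia.
- have := cd_lip H; rewrite /phi H2; case: (y.2 == j) => /=; lia.
Qed.

Let h := m./2.
Lemma h_lt : h < m. Proof. have := half_facts m; rewrite /h; lia. Qed.
Lemma h_gt0 : 0 < h. Proof. have := half_facts m; rewrite /h; lia. Qed.
Let i0 : 'I_m := Ordinal m_gt0.
Let hh : 'I_m := Ordinal h_lt.

Lemma cd_hh : cd m hh = h.
Proof. have := half_facts m; rewrite /cd /= /h; lia. Qed.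
Lemma cd_i0 : cd m i0 = 0.
Proof. by rewrite /cd /= min0n. Qed.

Lemma lb (j j' : 'I_n) : h + (j' != j) <= dist E (hh, j) (i0, j').
Proof.
apply: dist_lb.
  rewrite cardT; have := h_lt; have := n_gt0; case: (j' != j); nia.
move=> k /(pot_walk (phi_lip j)) [H _]; move: H.
rewrite /phi /= cd_hh cd_i0 eqxx; case: (j' == j) => /=; lia.
Qed.

Lemma ecc_ge (j : 'I_n) : h <= ecc E (i0, j).
Proof.
have H : h <= dist E (i0, j) (hh, j).
  apply: dist_lb.
    rewrite cardT; have := h_lt; have := n_gt0; nia.
  move=> k /(pot_walk (phi_lip j)) [_ H]; move: H.
  rewrite /phi /= cd_hh cd_i0 eqxx /=; lia.
apply: leq_trans H _; rewrite /ecc.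
exact: (@leq_bigmax _ (fun w => dist E (i0, j) w) (hh, j)).
Qed.

Definition fb (v : T) : nat := if v.1 == i0 then h else 0.

Lemma f_min : minimal_dominating E fb.
Proof.
apply/and3P; split.
- apply/forallP => [[a b]]; rewrite /fb /=; case: eqP => [-> | _] //; exact: ecc_ge.
- apply/forallP => [[a b]]; apply/existsP; exists (i0, b); rewrite /fb /= ?eqxx h_gt0 /=.
  have [k Hk W] := walk1 a i0 b.
  have Hlt : k < #|{: 'I_m * 'I_n}|.
    rewrite cardT; have := half_facts m; have := n_gt0; nia.
  exact: leq_trans (dist_le W Hlt) Hk.
- apply/forallP => [[a b]]; apply/implyP; rewrite /fb /=.
  case: eqP => [Ha _|]; last by rewrite ltnn.
  subst a; apply/negP => /forallP /(_ (hh, b)) /existsP [[c d] /andP [Hp Hd]].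
  move: Hp Hd; rewrite /decr_at /fb /=.
  case: eqP => [[-> ->] | Hne].
  + rewrite /= => _ Hd; have := lb b b; rewrite eqxx /= addn0; have := h_gt0; move: Hd; rewrite -subn1; lia.
  + case: eqP => [Hc|]; last by rewrite ltnn.
    subst c => _ Hd.
    have Hdb : d != b by apply/eqP => Hdb; apply: Hne; rewrite Hdb.
    have := lb b d; rewrite Hdb /=; lia.
Qed.

Lemma bcost_fb : bcost fb = n * h.
Proof.
rewrite /bcost.
have -> : \sum_(v : T) fb v = \sum_(i < m) \sum_(j < n) fb (i, j).
  by rewrite pair_big /=; apply: eq_big => // [[i j]].
rewrite (bigD1 i0) //=.
have -> : \sum_(i < m | i != i0) \sum_(j < n) fb (i, j) = 0.
  apply: big1 => i Hi; apply: big1 => j _.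
  by rewrite /fb /= (negbTE Hi).
rewrite addn0 /fb /= ?eqxx.
by rewrite sum_nat_const card_ord mulnC.
Qed.

Lemma not_diam : ~ diametrical E.
Proof.
move=> Hd.
have Hdiam : h <= diam E.
  apply: leq_trans (ecc_ge (Ordinal n_gt0)) _.
  rewrite /diam; exact: (@leq_bigmax _ (fun v => ecc E v) (i0, Ordinal n_gt0)).
pose F : {ffun T -> 'I_(diam E).+1} := [ffun v => inord (fb v)].
have Hf : (fun v => nat_of_ord (F v)) = fb.
  apply: functional_extensionality => v; rewrite ffunE inordK // ltnS /fb.
  by case: ifP.
have := @leq_bigmax_cond _ (fun F : {ffun T -> 'I_(diam E).+1} =>
   minimal_dominating E (fun v => nat_of_ord (F v)))
   (fun F : {ffun T -> 'I_(diam E).+1} => bcost (fun v => nat_of_ord (F v))) F.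
rewrite /= Hf bcost_fb => /(_ f_min) HG.
have := diam_le; move: Hd HG; rewrite /diametrical /Gamma_b => ->.
have := half_facts n; have := h_gt0; nia.
Qed.

End Torus.

Theorem mainTheorem13 (m n : nat) :
  3 <= m -> 3 <= n -> ~ diametrical (torus m n).
Proof. move=> Hm Hn; exact: not_diam. Qed.
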